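(* With notation as in the context, if $s\in\mathbb{S}_{p^n}$, $t\in\mathbb{S}_{p^n}(h)$ and $s\preceq\mathfrak{a}(t)$, then $\mathfrak{a}(H(s,t))=\mathfrak{a}(t)-s$.
   Context: Let $p$ be a prime, $n\ge1$, $\mathbb{S}_{p^n}=\{0,\dots,p^n-1\}$; write $s\in\mathbb{S}_{p^n}$ as $s=\sum_{i=1}^n s_{(n-i)}p^{n-i}$ with digits in $\{0,\dots,p-1\}$, and $s\preceq t$ means $s_{(n-i)}\le t_{(n-i)}$ for all $i$. Let $b_1,\dots,b_n$ be integers prime to $p$, $\mathfrak{b}(s)=\sum_i s_{(n-i)}p^{n-i}b_i$, and for $t\in\mathbb{Z}$ let $\mathfrak{a}(t)\in\mathbb{S}_{p^n}$ be the unique element with $\mathfrak{b}(\mathfrak{a}(t))\equiv-t\pmod{p^n}$. Let $r:\mathbb{Z}\to\mathbb{S}_{p^n}$ be reduction mod $p^n$. Fix $h\in\mathbb{Z}$, let $\mathbb{S}_{p^n}(h)=\{t\in\mathbb{Z}:h\le t<h+p^n\}$, and for $s\in\mathbb{S}_{p^n}$, $t\in\mathbb{S}_{p^n}(h)$ set $H(s,t)=h+r(\mathfrak{b}(s)+t-h)$. *)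

(* Defs.v *)
From mathcomp Require Import all_boot all_order all_algebra.
Set Implicit Arguments. Unset Strict Implicit. Unset Printing Implicit Defensive.
Import Order.TTheory GRing.Theory Num.Theory.

Definition digit (p s j : nat) : nat := (s %/ p ^ j) %% p.

Definition dprec (p n s t : nat) : Prop :=
  forall j, (j < n)%N -> (digit p s j <= digit p t j)%N.

Definition bfrak (p n : nat) (b : nat -> int) (s : nat) : int :=
  \sum_(1 <= i < n.+1) ((digit p s (n - i) * p ^ (n - i))%N%:Z * b i)%R.

(* frak a (t) : the unique element x of S_{p^n} = {0..p^n-1} with
   bfrak x = -t (mod p^n); computed as the least such x (p^n if none). *)
Definition afrak (p n : nat) (b : nat -> int) (t : int) : nat :=
  find (fun x => (bfrak p n b x == - t %[mod (p ^ n)%N%:Z])%Z) (iota 0 (p ^ n)).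

Definition rmod (p n : nat) (x : int) : int := (x %% (p ^ n)%N%:Z)%Z.

Definition Hmap (p n : nat) (b : nat -> int) (h : int) (s : nat) (t : int) : int :=
  (h + rmod p n (bfrak p n b s + t - h))%R.

(* Main.v *)
Require Import Defs.
From mathcomp Require Import all_boot all_order all_algebra.
From mathcomp Require Import zify ring.
Import Order.TTheory GRing.Theory Num.Theory.
Local Open Scope ring_scope.

Definition Fs (p : nat) (c : nat -> int) (n x : nat) : int :=
  \sum_(0 <= k < n) ((digit p x k * p ^ k)%N%:Z * c k).

Lemma digitS p x j : digit p x j.+1 = digit p (x %/ p) j.
Proof. by rewrite /digit expnS divnMA. Qed.

Lemma digit0 p x : digit p x 0 = (x %% p)%N.
Proof. by rewrite /digit expn0 divn1. Qed.

Lemma FsS p c n x : Fs p c n.+1 x =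
  (x %% p)%N%:Z * c 0%N + p%:Z * Fs p (fun k => c k.+1) n (x %/ p).
Proof.
rewrite /Fs big_nat_recl // digit0 expn0 muln1; congr (_ + _).
rewrite big_distrr; apply: eq_bigr => k _ /=.
rewrite digitS expnS !PoszM; ring.
Qed.

Lemma Fs_inj p (pp : prime p) n : forall c x y,
  (forall k, (k < n)%N -> coprimez (c k) p) -> (x < p ^ n)%N -> (y < p ^ n)%N ->
  ((p ^ n)%N%:Z %| Fs p c n x - Fs p c n y)%Z -> x = y.
Proof.
have p0 : (0 < p)%N by apply: prime_gt0.
elim: n => [|n IH] c x y Hc hx hy hd.
  rewrite expn0 in hx hy; lia.
move: hd; rewrite !FsS.
set X := Fs _ _ _ (x %/ p); set Y := Fs _ _ _ (y %/ p) => hd.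
have hpd : (p%:Z %| (p ^ n.+1)%N%:Z)%Z.
  by rewrite expnS PoszM dvdz_mulr.
have e : ((x %% p)%N%:Z * c 0%N + p%:Z * X - ((y %% p)%N%:Z * c 0%N + p%:Z * Y))
   = ((x %% p)%N%:Z - (y %% p)%N%:Z) * c 0%N + p%:Z * (X - Y) by ring.
rewrite e in hd.
have h1 : (p%:Z %| ((x %% p)%N%:Z - (y %% p)%N%:Z) * c 0%N)%Z.
  have h2 := dvdz_trans hpd hd.
  have h3 := rpredB h2 (dvdz_mulr (X - Y) (dvdzz p%:Z)).
  by rewrite addrK in h3.
rewrite Gauss_dvdzl in h1; last by rewrite coprimez_sym; apply: Hc.
rewrite -eqz_mod_dvd !modz_nat !modn_mod in h1.
have hm : (x %% p)%N = (y %% p)%N.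
  by move/eqP: h1 => /eqP; rewrite eqz_nat => /eqP.
rewrite hm subrr mul0r add0r expnS PoszM dvdz_mul2l in hd; last first.
  by rewrite eqz_nat -lt0n.
have hxy : (x %/ p = y %/ p)%N.
  apply: (IH (fun k => c k.+1)) => //.
  - by move=> k hk; apply: Hc.
  - by rewrite ltn_divLR // -expnSr.
  - by rewrite ltn_divLR // -expnSr.
by rewrite (divn_eq x p) (divn_eq y p) hxy hm.
Qed.

Lemma digit_sub p (p0 : (0 < p)%N) n : forall a s,
  (forall j, (j < n)%N -> (digit p s j <= digit p a j)%N) ->
  (s < p ^ n)%N -> (a < p ^ n)%N ->
  (s <= a)%N /\ forall j, (j < n)%N -> digit p (a - s) j = (digit p a j - digit p s j)%N.
Proof.
elim: n => [|n IH] a s H hs ha.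
  rewrite expn0 in hs ha; split => //; lia.
have [IH1 IH2] : (s %/ p <= a %/ p)%N /\ forall j, (j < n)%N ->
   digit p (a %/ p - s %/ p) j = (digit p (a %/ p) j - digit p (s %/ p) j)%N.
  apply: IH.
  - by move=> j hj; rewrite -!digitS; apply: H.
  - by rewrite ltn_divLR // -expnSr.
  - by rewrite ltn_divLR // -expnSr.
have h0 := H 0%N isT; rewrite !digit0 in h0.
have hlt : (a %% p < p)%N by rewrite ltn_mod.
have hm := leq_mul2r p (s %/ p) (a %/ p); rewrite IH1 orbT in hm.
have E : (a - s = (a %/ p - s %/ p) * p + (a %% p - s %% p))%N.
  rewrite mulnBl; move: (divn_eq a p) (divn_eq s p) hm h0.
  move: (a %/ p * p)%N (s %/ p * p)%N (a %% p)%N (s %% p)%N => u v w z; lia.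
split.
  move: (divn_eq a p) (divn_eq s p) hm h0.
  move: (a %/ p * p)%N (s %/ p * p)%N (a %% p)%N (s %% p)%N => u v w z; lia.
case=> [|j] hj.
  rewrite !digit0 E modnMDl modn_small //.
  exact: (leq_ltn_trans (leq_subr _ _) hlt).
rewrite !digitS E divnMDl // (divn_small (leq_ltn_trans (leq_subr (s %% p) (a %% p)) hlt)) addn0.
by apply: IH2.
Qed.

Lemma digit_zero p (p0 : (0 < p)%N) n : forall s,
  (s < p ^ n)%N -> (forall j, (j < n)%N -> digit p s j = 0%N) -> s = 0%N.
Proof.
elim: n => [|n IH] s hs H.
  rewrite expn0 in hs; lia.
have h1 : (s %/ p = 0)%N.
  apply: IH; first by rewrite ltn_divLR // -expnSr.
  by move=> j hj; rewrite -digitS; apply: H.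
have h2 := H 0%N isT; rewrite digit0 in h2.
by rewrite (divn_eq s p) h1 h2.
Qed.

Lemma digit_pow p (p0 : (0 < p)%N) n j : (j < n)%N -> digit p (p ^ n) j = 0%N.
Proof.
move=> hj; rewrite /digit -expnB //; last by lia.
by rewrite (_ : (n - j = (n - j).-1.+1)%N) ?expnSr ?modnMl //; lia.
Qed.

Lemma bfrak_Fs p n b x : bfrak p n b x = Fs p (fun k => b (n - k)%N) n x.
Proof.
rewrite /bfrak /Fs (big_addn 0 n.+1 1) subn1 /= big_nat_rev /=.
apply: eq_big_nat => i /andP[_ hi].
have e1 : (0 + n - i.+1 + 1 = n - i)%N by lia.
have e2 : (n - (n - i) = i)%N by lia.
by rewrite e1 e2.
Qed.

Lemma Fs_sub p (p0 : (0 < p)%N) c n a s :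
  (forall j, (j < n)%N -> (digit p s j <= digit p a j)%N) ->
  (s < p ^ n)%N -> (a < p ^ n)%N ->
  Fs p c n (a - s)%N = Fs p c n a - Fs p c n s.
Proof.
move=> H hs ha; have [_ hd] := @digit_sub p p0 n a s H hs ha.
rewrite /Fs -sumrB; apply: eq_big_nat => k /andP[_ hk].
rewrite hd // mulnBl -subzn ?mulrBl //.
by rewrite leq_mul2r H // orbT.
Qed.

Lemma Fs0 p c n : Fs p c n 0 = 0.
Proof. rewrite /Fs big1 // => k _; by rewrite /digit div0n mod0n mul0n mul0r. Qed.

Theorem proposition3p11 (p n : nat) (b : nat -> int) (h : int) (s : nat) (t : int) :
  prime p -> (1 <= n)%N ->
  (forall i, (1 <= i <= n)%N -> coprimez (b i) p%:Z) ->
  (s < p ^ n)%N ->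
  (h <= t)%R -> (t < h + (p ^ n)%N%:Z)%R ->
  dprec p n s (afrak p n b t) ->
  (afrak p n b (Hmap p n b h s t))%:Z = ((afrak p n b t)%:Z - s%:Z)%R.
Proof.
move=> pp n1 hb hs hht hth hd.
have p0 := prime_gt0 pp.
have hc : forall k, (k < n)%N -> coprimez (b (n - k)%N) p.
  by move=> k hk; apply: hb; lia.
have haM : (afrak p n b t <= p ^ n)%N.
  rewrite /afrak; have := find_size (fun x => (bfrak p n b x == - t %[mod (p ^ n)%N%:Z])%Z) (iota 0 (p ^ n)).
  by rewrite size_iota.
move: haM; rewrite leq_eqVlt => /orP[/eqP haE | haM'].
  have s0 : s = 0%N.
    apply: (@digit_zero p p0 n s hs) => j hj.
    move: (hd j hj); rewrite haE digit_pow //; lia.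
  subst s.
  rewrite /Hmap /rmod bfrak_Fs Fs0 add0r modz_small; last first.
    apply/andP; split; rewrite ?subr_ge0 // ltrBlDl //.
  by rewrite addrC subrK subr0.
have hpa : (bfrak p n b (afrak p n b t) == - t %[mod (p ^ n)%N%:Z])%Z.
  have hh : has (fun x => (bfrak p n b x == - t %[mod (p ^ n)%N%:Z])%Z) (iota 0 (p ^ n)).
    by rewrite has_find size_iota.
  have := nth_find 0%N hh; rewrite nth_iota //.
have hsub : bfrak p n b (afrak p n b t - s)%N = bfrak p n b (afrak p n b t) - bfrak p n b s.
  by rewrite !bfrak_Fs Fs_sub.
have [hsa _] := @digit_sub p p0 n _ _ hd hs haM'.
set a := afrak p n b t in hpa hsub hsa haM' *.
set H := Hmap p n b h s t.
have hpH : (bfrak p n b (a - s)%N == - H %[mod (p ^ n)%N%:Z])%Z.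
  move: hpa; rewrite !eqz_mod_dvd => hpa.
  set X := bfrak p n b s + t - h.
  have dz := divz_eq X (p ^ n)%N%:Z.
  have e : bfrak p n b (a - s)%N - - H = (bfrak p n b a - - t) - (X %/ (p ^ n)%N%:Z)%Z * (p ^ n)%N%:Z.
    rewrite hsub /H /Hmap /rmod -/X.
    move: dz; rewrite /X.
    move: ((bfrak p n b s + t - h) %/ (p ^ n)%N%:Z)%Z => q.
    move: ((bfrak p n b s + t - h) %% (p ^ n)%N%:Z)%Z => r.
    move: (q * (p ^ n)%N%:Z) => u; lia.
  by rewrite e; apply: rpredB hpa (dvdz_mull _ (dvdzz _)).
have hh2 : has (fun x => (bfrak p n b x == - H %[mod (p ^ n)%N%:Z])%Z) (iota 0 (p ^ n)).
  apply/hasP; exists (a - s)%N => //; rewrite mem_iota; lia.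
have hfl : (find (fun x => (bfrak p n b x == - H %[mod (p ^ n)%N%:Z])%Z) (iota 0 (p ^ n)) < p ^ n)%N.
  by have := hh2; rewrite has_find size_iota.
have := nth_find 0%N hh2; rewrite nth_iota // add0n => hpi.
rewrite /afrak (_ : find _ _ = (a - s)%N) ?subzn //.
apply: (@Fs_inj p pp n (fun k => b (n - k)%N)) => //.
  lia.
move: hpi hpH; rewrite !eqz_mod_dvd -!bfrak_Fs => h1 h2.
have := rpredB h1 h2.
have e : forall x y z : int, x - - z - (y - - z) = x - y by move=> *; ring.
by rewrite e.
Qed.
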